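(* Let $\mathcal{H}$ be a separable complex Hilbert space, let $T \in B(\mathcal{H})$, and write $T = A + iB$ with $A = A^*$ and $B = B^*$. If $\operatorname{rank}(A) = 1$ or $\operatorname{rank}(B) = 1$, then $T$ is a complex symmetric operator.
   Context: A conjugation on $\mathcal{H}$ is a conjugate-linear map $C:\mathcal{H}\to\mathcal{H}$ that is isometric and involutive ($C^2=I$). An operator $T$ is complex symmetric if $T = CT^*C$ for some conjugation $C$. *)

(* Defs.v *)
From HB Require Import structures.
From mathcomp Require Import all_boot all_order all_algebra.
From mathcomp Require Import reals.
From mathcomp Require Import complex.
Set Implicit Arguments. Unset Strict Implicit. Unset Printing Implicit Defensive.
Import Order.TTheory GRing.Theory Num.Theory.
Local Open Scope ring_scope.

Section Hilbert.
Variable R : realType.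
Local Notation C := R[i].
Variable V : lmodType C.
Variable ip : V -> V -> C.

Definition inner_product : Prop :=
  [/\ forall (a : C) (x y z : V), ip (a *: x + y) z = a * ip x z + ip y z,
      forall x y : V, ip y x = (ip x y)^*,
      forall x : V, 0 <= ip x x
    & forall x : V, ip x x = 0 -> x = 0].

(* the induced norm ||x|| = sqrt <x, x> (a nonnegative real in C) *)
Definition hnorm (x : V) : C := sqrtC (ip x x).

Definition cauchy_seq (u : nat -> V) : Prop :=
  forall e : C, 0 < e -> exists N : nat, forall m n : nat,
    (N <= m)%N -> (N <= n)%N -> hnorm (u m - u n) < e.

Definition converges_to (u : nat -> V) (l : V) : Prop :=
  forall e : C, 0 < e -> exists N : nat, forall n : nat,
    (N <= n)%N -> hnorm (u n - l) < e.

Definition complete : Prop :=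
  forall u : nat -> V, cauchy_seq u -> exists l : V, converges_to u l.

Definition separable : Prop :=
  exists d : nat -> V, forall (x : V) (e : C), 0 < e ->
    exists n : nat, hnorm (x - d n) < e.

Definition separable_hilbert : Prop :=
  [/\ inner_product, complete & separable].

Definition is_linear (T : V -> V) : Prop :=
  forall (a : C) (x y : V), T (a *: x + y) = a *: T x + T y.

Definition bounded_op (T : V -> V) : Prop :=
  is_linear T /\ exists M : C, forall x : V, hnorm (T x) <= M * hnorm x.

Definition is_adjoint (T S : V -> V) : Prop :=
  forall x y : V, ip (T x) y = ip x (S y).

Definition self_adjoint (A : V -> V) : Prop := is_adjoint A A.

(* rank A = dim (range A); rank A = 1 means the range of A is a
   one-dimensional subspace: spanned by a single nonzero vector *)
Definition rank_one (A : V -> V) : Prop :=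
  exists u : V, u != 0 /\
    (forall x : V, exists c : C, A x = c *: u) /\
    (exists x : V, A x = u).

Definition conjugation (J : V -> V) : Prop :=
  [/\ forall x y : V, J (x + y) = J x + J y,
      forall (a : C) (x : V), J (a *: x) = a^* *: J x,
      forall x : V, hnorm (J x) = hnorm x
    & forall x : V, J (J x) = x].

Definition complex_symmetric (T : V -> V) : Prop :=
  exists J : V -> V, conjugation J /\
    exists S : V -> V, is_adjoint T S /\ forall x : V, T x = J (S (J x)).

End Hilbert.

(* Main.v *)
Require Import Defs.
From HB Require Import structures.
From mathcomp Require Import all_boot all_order all_algebra.
From mathcomp Require Import boolp classical_sets.
From mathcomp Require Import reals.
From mathcomp Require Import ring lra.
From mathcomp Require Import complex.
Import Order.TTheory GRing.Theory Num.Theory.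
Local Open Scope complex_scope.
Local Open Scope ring_scope.
Set Implicit Arguments. Unset Strict Implicit. Unset Printing Implicit Defensive.

Section Basic.
Variable R : realType.
Local Notation C := R[i].
Variable V : lmodType C.
Variable ip : V -> V -> C.
Hypothesis Hip : inner_product ip.

Lemma conjE (z : C) : z^* = conjc z.
Proof. by []. Qed.

Lemma cjD (a b : C) : (a + b)^* = a^* + b^*. Proof. exact: rmorphD. Qed.
Lemma cjM (a b : C) : (a * b)^* = a^* * b^*. Proof. exact: rmorphM. Qed.
Lemma cjN (a : C) : (- a)^* = - a^*. Proof. exact: rmorphN. Qed.
Lemma cjB (a b : C) : (a - b)^* = a^* - b^*. Proof. exact: rmorphB. Qed.
Lemma cjK (a : C) : a^*^* = a. Proof. exact: conjCK. Qed.
Lemma cj0 : (0 : C)^* = 0. Proof. exact: rmorph0. Qed.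
Lemma cjR (r : R) : (r%:C)^* = r%:C. Proof. by rewrite conjE /= oppr0. Qed.
Lemma cji : ('i%C : C)^* = - 'i%C. Proof. by apply/eqP; rewrite eq_complex /= oppr0 !eqxx. Qed.

Lemma ipL a x y z : ip (a *: x + y) z = a * ip x z + ip y z.
Proof. by case: Hip. Qed.
Lemma ipC x y : ip y x = (ip x y)^*.
Proof. by case: Hip. Qed.
Lemma ipP x : 0 <= ip x x.
Proof. by case: Hip. Qed.
Lemma ipD0 x : ip x x = 0 -> x = 0.
Proof. by case: Hip => _ _ _; apply. Qed.

Lemma ip0l z : ip 0 z = 0.
Proof.
have := ipL 1 0 0 z; rewrite scaler0 addr0 mul1r => h.
by apply: (addrI (ip 0 z)); rewrite addr0 -h.
Qed.
Lemma ipDl x y z : ip (x + y) z = ip x z + ip y z.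
Proof. by rewrite -{1}[x]scale1r ipL mul1r. Qed.
Lemma ipZl a x z : ip (a *: x) z = a * ip x z.
Proof. by rewrite -[a *: x]addr0 ipL ip0l addr0. Qed.
Lemma ipNl x z : ip (- x) z = - ip x z.
Proof. by rewrite -scaleN1r ipZl mulN1r. Qed.
Lemma ipBl x y z : ip (x - y) z = ip x z - ip y z.
Proof. by rewrite ipDl ipNl. Qed.
Lemma ip0r z : ip z 0 = 0.
Proof. by rewrite ipC ip0l cj0. Qed.
Lemma ipDr x y z : ip z (x + y) = ip z x + ip z y.
Proof. by rewrite ipC ipDl cjD -!ipC. Qed.
Lemma ipZr a x z : ip z (a *: x) = a^* * ip z x.
Proof. by rewrite ipC ipZl cjM -!ipC. Qed.
Lemma ipNr x z : ip z (- x) = - ip z x.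
Proof. by rewrite ipC ipNl cjN -!ipC. Qed.
Lemma ipBr x y z : ip z (x - y) = ip z x - ip z y.
Proof. by rewrite ipDr ipNr. Qed.

Definition nq (x : V) : R := complex.Re (ip x x).

Lemma ipxx x : ip x x = (nq x)%:C.
Proof.
have := ipP x; rewrite lecE /= => /andP[/eqP h _].
by rewrite /nq; case: (ip x x) h => a b /= ->.
Qed.
Lemma nq_ge0 x : 0 <= nq x.
Proof. by have := ipP x; rewrite ipxx lecR. Qed.
Lemma nq_eq0 x : nq x = 0 -> x = 0.
Proof. by move=> h; apply: ipD0; rewrite ipxx h. Qed.
Lemma nq0 : nq 0 = 0.
Proof. by rewrite /nq ip0l. Qed.

Lemma ReJ (z : C) : complex.Re (z^*) = complex.Re z.
Proof. by case: z. Qed.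
Lemma ImJ (z : C) : complex.Im (z^*) = - complex.Im z.
Proof. by case: z. Qed.

Lemma nqD x y : nq (x + y) = nq x + nq y + 2 * complex.Re (ip x y).
Proof.
rewrite /nq ipDl !ipDr [ip y x]ipC !raddfD /= ReJ; ring.
Qed.
Lemma nqN x : nq (- x) = nq x.
Proof. by rewrite /nq ipNl ipNr opprK. Qed.
Lemma nqB x y : nq (x - y) = nq x + nq y - 2 * complex.Re (ip x y).
Proof. by rewrite nqD nqN ipNr raddfN /=; ring. Qed.
Lemma nqZ (a : C) x : nq (a *: x) = (complex.Re a ^+ 2 + complex.Im a ^+ 2) * nq x.
Proof.
rewrite /nq ipZl ipZr ipxx; case: a => a b /=; ring.
Qed.
Lemma nqZr (r : R) x : nq (r%:C *: x) = r ^+ 2 * nq x.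
Proof. by rewrite nqZ /=; congr (_ * _); ring. Qed.
Lemma nq_i x : nq ('i%C *: x) = nq x.
Proof. by rewrite nqZ /=; ring. Qed.


Lemma CS x y : complex.Re (ip x y) ^+ 2 + complex.Im (ip x y) ^+ 2 <= nq x * nq y.
Proof.
have [n0|nP] := eqVneq (nq y) 0.
  by rewrite (nq_eq0 n0) ip0r nq0 mulr0 /= expr0n /= addr0.
have ngt : 0 < nq y by rewrite lt_neqAle eq_sym nP nq_ge0.
case E: (ip x y) => [p q] /=.
pose t : C := (p / nq y) +i* (q / nq y).
have h := nq_ge0 (x - t *: y).
rewrite nqB nqZ ipZr E /= in h.
have e1 : ((p / nq y) ^+ 2 + (q / nq y) ^+ 2) * nq y = (p ^+ 2 + q ^+ 2) / nq y.
  by field.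
have e2 : (p / nq y * p - - (q / nq y) * q) = (p ^+ 2 + q ^+ 2) / nq y.
  by field.
rewrite e1 e2 in h.
have h2 : (p ^+ 2 + q ^+ 2) / nq y <= nq x by lra.
by rewrite -ler_pdivrMr.
Qed.

End Basic.

Section Anal.
Variable R : realType.
Local Notation C := R[i].
Variable V : lmodType C.
Variable ip : V -> V -> C.
Hypothesis Hip : inner_product ip.
Local Notation nq := (nq ip).

Lemma ImB (a b : C) : complex.Im (a - b) = complex.Im a - complex.Im b.
Proof. by case: a; case: b. Qed.
Lemma ReB (a b : C) : complex.Re (a - b) = complex.Re a - complex.Re b.
Proof. by case: a; case: b. Qed.

Definition conv (u : nat -> V) (l : V) :=
  forall e : R, 0 < e -> exists N, forall n, (N <= n)%N -> nq (u n - l) < e.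
Definition cauchy (u : nat -> V) :=
  forall e : R, 0 < e -> exists N, forall m n, (N <= m)%N -> (N <= n)%N ->
    nq (u m - u n) < e.

Lemma nq_add_le a b : nq (a + b) <= 2 * nq a + 2 * nq b.
Proof.
have h1 := nqD Hip a b; have h2 := nqB Hip a b; have h3 := nq_ge0 Hip (a - b).
lra.
Qed.

Lemma nq_sub_le a b c : nq (a - c) <= 2 * nq (a - b) + 2 * nq (b - c).
Proof. by have := nq_add_le (a - b) (b - c); rewrite addrA subrK. Qed.

Lemma small0 (x : R) : 0 <= x -> (forall e, 0 < e -> x < e) -> x = 0.
Proof.
move=> x0 h; apply/eqP; rewrite eq_le x0 andbT; apply/negP => /negP.
rewrite -ltNge => xp; have := h x xp; by rewrite ltxx.
Qed.

Lemma conv_cauchy u l : conv u l -> cauchy u.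
Proof.
move=> cu e ep; have [N HN] := cu (e / 4) ltac:(lra).
exists N => m n hm hn.
have := nq_sub_le (u m) l (u n).
have a := HN _ hm; have b := HN _ hn.
rewrite -(nqN Hip (l - u n)) opprB => hh; lra.
Qed.

Lemma conv_uniq u l l' : conv u l -> conv u l' -> l = l'.
Proof.
move=> c1 c2; apply/eqP; rewrite -subr_eq0; apply/eqP; apply: (nq_eq0 Hip).
apply: small0; first exact: nq_ge0.
move=> e ep; have [N1 H1] := c1 (e / 4) ltac:(lra).
have [N2 H2] := c2 (e / 4) ltac:(lra).
have := nq_sub_le l (u (maxn N1 N2)) l'.
have a := H1 (maxn N1 N2) (leq_maxl _ _); have b := H2 (maxn N1 N2) (leq_maxr _ _).
rewrite -(nqN Hip (l - u (maxn N1 N2))) opprB => hh; lra.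
Qed.

Lemma conv_const l : conv (fun _ => l) l.
Proof. by move=> e ep; exists 0%N => n _; rewrite subrr nq0. Qed.

Lemma conv_add u v l m : conv u l -> conv v m -> conv (fun n => u n + v n) (l + m).
Proof.
move=> c1 c2 e ep; have [N1 H1] := c1 (e / 4) ltac:(lra).
have [N2 H2] := c2 (e / 4) ltac:(lra).
exists (maxn N1 N2) => n hn.
have a := H1 n (leq_trans (leq_maxl _ _) hn); have b := H2 n (leq_trans (leq_maxr _ _) hn).
have -> : u n + v n - (l + m) = (u n - l) + (v n - m).
  by rewrite opprD addrACA.
have := nq_add_le (u n - l) (v n - m) => hh; lra.
Qed.

Lemma conv_lin (F : V -> V) (K : R) u l :
  (forall a b, F (a - b) = F a - F b) -> (forall z, nq (F z) <= K * nq z) ->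
  conv u l -> conv (fun n => F (u n)) (F l).
Proof.
move=> Fl FK c e ep.
have K1 : 0 < `|K| + 1 by have := normr_ge0 K; lra.
have [N HN] := c (e / (`|K| + 1)) (divr_gt0 ep K1).
exists N => n hn; rewrite -Fl; apply: (le_lt_trans (FK _)).
have h := HN n hn; have z0 := nq_ge0 Hip (u n - l).
have kk : K <= `|K| by exact: ler_norm.
apply: (@le_lt_trans _ _ ((`|K| + 1) * nq (u n - l))); first nra.
by rewrite mulrC -ltr_pdivlMr.
Qed.

Lemma conv_scale (a : C) u l : conv u l -> conv (fun n => a *: u n) (a *: l).
Proof.
apply: (conv_lin (K := complex.Re a ^+ 2 + complex.Im a ^+ 2)); first by move=> x y; rewrite scalerBr.
by move=> z; rewrite nqZ.
Qed.

Lemma conv_real u l z : conv u l -> (forall n, complex.Im (ip (u n) z) = 0) -> complex.Im (ip l z) = 0.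
Proof.
move=> c h; apply/eqP; rewrite -sqrf_eq0; apply/eqP; apply: small0.
  exact: sqr_ge0.
move=> e ep.
have K1 : 0 < nq z + 1 by have := nq_ge0 Hip z; lra.
have [N HN] := c (e / (nq z + 1)) (divr_gt0 ep K1).
have hN := HN N (leqnn N).
have cs := CS Hip (u N - l) z.
rewrite (ipBl Hip) ImB h sub0r sqrrN in cs.
have r0 := sqr_ge0 (complex.Re (ip (u N) z - ip l z)).
have z0 := nq_ge0 Hip z; have w0 := nq_ge0 Hip (u N - l).
have hlt : nq (u N - l) * (nq z + 1) < e by rewrite -ltr_pdivlMr.
have hm : nq (u N - l) * nq z <= nq (u N - l) * (nq z + 1) by rewrite ler_wpM2l //; lra.
lra.
Qed.

Lemma nq_lim_le x u p (d : R) : conv u p ->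
  (forall eta, 0 < eta -> exists N, forall n, (N <= n)%N -> nq (x - u n) <= d + eta) ->
  nq (x - p) <= d.
Proof.
move=> c h; rewrite leNgt; apply/negP => hlt.
set eta := nq (x - p) - d.
have etap : 0 < eta by rewrite /eta; lra.
have [N1 H1] := h (eta / 4) ltac:(lra).
have d0 : 0 <= d + eta / 4 + 1.
  have := H1 N1 (leqnn _); have := nq_ge0 Hip (x - u N1); lra.
set K := d + eta / 4 + 1.
set e2 := Num.min (eta / 4) ((eta / 4) ^+ 2 / (K + 1)).
have e2p : 0 < e2.
  by rewrite lt_min; apply/andP; split; [lra| apply: divr_gt0; [apply: exprn_gt0; lra|rewrite /K; lra]].
have [N2 H2] := c e2 e2p.
set n := maxn N1 N2.
have a := H1 n (leq_maxl _ _); have b := H2 n (leq_maxr _ _).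
have e2a : e2 <= eta / 4 by rewrite /e2 ge_min lexx.
have e2b : e2 <= (eta / 4) ^+ 2 / (K + 1) by rewrite /e2 ge_min lexx orbT.
have cs := CS Hip (x - u n) (u n - p).
have e3 : x - p = (x - u n) + (u n - p) by rewrite addrA subrK.
have hD := nqD Hip (x - u n) (u n - p); rewrite -e3 in hD.
have k1 : nq (x - u n) <= K by rewrite /K; lra.
have w0 := nq_ge0 Hip (x - u n); have w1 := nq_ge0 Hip (u n - p).
have i0 := sqr_ge0 (complex.Im (ip (x - u n) (u n - p))).
have e2c : e2 * (K + 1) <= (eta / 4) ^+ 2 by rewrite -ler_pdivlMr //; lra.
set r := complex.Re (ip (x - u n) (u n - p)) in cs hD.
have rb : r ^+ 2 <= (eta / 4) ^+ 2 by nra.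
have rb2 : r <= eta / 4 by nra.
have etaE : eta = nq (x - p) - d by [].
lra.
Qed.

End Anal.

Section Conv.
Variable R : realType.
Local Notation C := R[i].
Variable V : lmodType C.
Variable ip : V -> V -> C.
Hypothesis Hip : inner_product ip.
Local Notation nq := (nq ip).

Lemma hnormE x : hnorm ip x = (Num.sqrt (nq x))%:C.
Proof.
rewrite /hnorm (ipxx Hip).
have -> : (nq x)%:C = ((Num.sqrt (nq x))%:C) ^+ 2.
  by rewrite -rmorphXn /= sqr_sqrtr // nq_ge0.
by rewrite sqrCK // ler0c sqrtr_ge0.
Qed.

Lemma hnorm_lt x (r : R) : 0 < r -> (hnorm ip x < r%:C) = (nq x < r ^+ 2).
Proof.
move=> rp; rewrite hnormE ltcR.
have r2 : 0 < r ^+ 2 by apply: exprn_gt0.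
by rewrite -(@ltr_sqrt _ (nq x) (r ^+ 2) r2) sqrtr_sqr ger0_norm //; exact: ltW.
Qed.

Lemma posC (e : C) : 0 < e -> e = (complex.Re e)%:C /\ 0 < complex.Re e.
Proof.
rewrite ltcE /= => /andP[/eqP h1 h2]; split => //.
by case: e h1 h2 => a b /= -> _.
Qed.

Lemma complete_conv : separable_hilbert ip -> forall u, cauchy ip u -> exists l, conv ip u l.
Proof.
case=> _ hc _ u cu.
have [l hl] : exists l, converges_to ip u l.
  apply: hc => e ep; have [-> rp] := posC ep.
  have [N HN] := cu _ (exprn_gt0 2 rp).
  by exists N => m n hm hn; rewrite hnorm_lt //; apply: HN.
exists l => e ep.
have sp : 0 < Num.sqrt e by rewrite sqrtr_gt0.
have ep' : 0 < (Num.sqrt e)%:C by rewrite ltcR.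
have [N HN] := hl _ ep'; exists N => n hn.
by have := HN n hn; rewrite hnorm_lt // sqr_sqrtr //; exact: ltW.
Qed.

Lemma small_N (e : R) : 0 < e -> exists N : nat, (N.+1%:R : R)^-1 < e.
Proof.
move=> ep; set N := Num.bound (e^-1); exists N.
have h : e^-1 < N%:R by apply: archi_boundP; rewrite invr_ge0; exact: ltW.
rewrite invf_plt ?posrE ?ltr0n //.
by apply: (lt_le_trans h); rewrite ler_nat.
Qed.

Lemma inv_mono (N n : nat) : (N <= n)%N -> (n.+1%:R : R)^-1 <= (N.+1%:R)^-1.
Proof.
move=> h; rewrite lef_pV2 ?posrE ?ltr0n // ler_nat; by [].
Qed.

Lemma linP (F : V -> V) : is_linear F ->
  [/\ F 0 = 0, forall a b, F (a + b) = F a + F b,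
      forall a b, F (a - b) = F a - F b & forall (c : C) a, F (c *: a) = c *: F a].
Proof.
move=> h.
have F0 : F 0 = 0.
  have := h 1 0 0; rewrite scaler0 addr0 scale1r => e.
  by apply: (addrI (F 0)); rewrite addr0 -e.
have FD : forall a b, F (a + b) = F a + F b.
  by move=> a b; have := h 1 a b; rewrite !scale1r.
have FZ : forall (c : C) a, F (c *: a) = c *: F a.
  by move=> c a; have := h c a 0; rewrite !addr0 F0 addr0.
split => // a b; by rewrite FD -scaleN1r FZ scaleN1r.
Qed.

Lemma ReMR (r : R) (z : C) : complex.Re (r%:C * z) = r * complex.Re z.
Proof. by case: z => a b /=; ring. Qed.
Lemma ImMR (r : R) (z : C) : complex.Im (r%:C * z) = r * complex.Im z.
Proof. by case: z => a b /=; ring. Qed.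

Lemma bounded_nq (F : V -> V) : bounded_op ip F ->
  exists K : R, forall z, nq (F z) <= K * nq z.
Proof.
case=> /linP [F0 _ _ _] [M HM]; exists (complex.Re M ^+ 2) => z.
have [n0|nP] := eqVneq (nq z) 0.
  by rewrite (nq_eq0 Hip n0) F0 (nq0 Hip) mulr0.
have ngt : 0 < nq z by rewrite lt_neqAle eq_sym nP nq_ge0.
have := HM z; rewrite !hnormE lecE => /andP[/eqP hi hr].
rewrite mulrC ReMR /= in hr.
set s := Num.sqrt (nq z) in hr; set t := Num.sqrt (nq (F z)) in hr.
have t0 : 0 <= t by apply: sqrtr_ge0.
have s0 : 0 <= s by apply: sqrtr_ge0.
have e1 : nq (F z) = t ^+ 2 by rewrite sqr_sqrtr // nq_ge0.
have e2 : nq z = s ^+ 2 by rewrite sqr_sqrtr // nq_ge0.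
rewrite e1 e2; have hm : 0 <= s * complex.Re M by lra.
have : t ^+ 2 <= (s * complex.Re M) ^+ 2 by rewrite ler_sqr.
move=> hh; rewrite exprMn in hh; lra.
Qed.

End Conv.

Section Proj.
Variable R : realType.
Local Notation C := R[i].
Variable V : lmodType C.
Variable ip : V -> V -> C.
Hypothesis Hip : inner_product ip.
Local Notation nq := (nq ip).

Lemma para A B : nq (A + B) + nq (A - B) = 2 * nq A + 2 * nq B.
Proof. rewrite (nqD Hip) (nqB Hip); ring. Qed.

Lemma two_mid (x a b : V) :
  (x - a) + (x - b) = (2%:R : R)%:C *: (x - (2^-1 : R)%:C *: (a + b)).
Proof.
rewrite scalerBr scalerA -rmorphM /= divff ?pnatr_eq0 // scale1r.
rewrite rmorph_nat scaler_nat mulr2n opprD !addrA; congr (_ - _).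
by rewrite addrAC.
Qed.

Lemma proj (M : V -> Prop) : separable_hilbert ip -> M 0 ->
  (forall a b, M a -> M b -> M (a + b)) ->
  (forall (r : R) a, M a -> M (r%:C *: a)) ->
  (forall u l, (forall n, M (u n)) -> conv ip u l -> M l) ->
  forall x, exists p, M p /\ forall m, M m -> complex.Re (ip (x - p) m) = 0.
Proof.
move=> sh M0 MD MZ Mcl x.
pose S : set R := fun r => exists m, M m /\ r = nq (x - m).
have hinf : has_inf S.
  split; first by exists (nq (x - 0)); exists 0.
  by exists 0 => r [m [_ ->]]; apply: nq_ge0.
set d := inf S.
have hlb : forall m, M m -> d <= nq (x - m).
  by move=> m Mm; apply: (ge_inf hinf.2); exists m.
have ipos : forall n : nat, 0 < (n.+1%:R : R)^-1 by move=> n; rewrite invr_gt0 ltr0Sn.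
have adh : forall n : nat, exists m, M m /\ nq (x - m) < d + (n.+1%:R)^-1.
  move=> n; have [r [m [Mm ->]] hr] := inf_adherent (ipos n) hinf.
  by exists m.
have [f Hf] := choice adh.
have key : forall a b, nq (f a - f b) <= 2 * (a.+1%:R)^-1 + 2 * (b.+1%:R)^-1.
  move=> a b; have := para (x - f a) (x - f b).
  rewrite two_mid (nqZr Hip).
  have -> : x - f a - (x - f b) = - (f a - f b).
    by rewrite [RHS]opprB opprB addrC addrA subrK.
  rewrite (nqN Hip).
  have h1 := hlb _ (MZ (2^-1) _ (MD _ _ (proj1 (Hf a)) (proj1 (Hf b)))).
  have h2 := proj2 (Hf a); have h3 := proj2 (Hf b).
  move=> hh; rewrite [_ ^+ 2]expr2 in hh. set ia := (a.+1%:R : R)^-1 in h2 *; set ib := (b.+1%:R : R)^-1 in h3 *; set q := nq (x - _) in h1 hh; lra.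
have cf : cauchy ip f.
  move=> e ep; have e4p : 0 < e / 4 by lra.
  have [N HN] := small_N e4p.
  exists N => m n hm hn; apply: (le_lt_trans (key m n)).
  have := inv_mono R hm; have := inv_mono R hn; move=> i1 i2.
  set im := (m.+1%:R : R)^-1 in i1 i2 *; set iN := (N.+1%:R : R)^-1 in HN i1 i2; set iN2 := (n.+1%:R : R)^-1 in i1 i2 *.
  lra.
have [p cp] := complete_conv Hip sh cf.
have Mp : M p by apply: (Mcl f) => // n; exact: (proj1 (Hf n)).
have hp : nq (x - p) <= d.
  apply: (nq_lim_le Hip cp) => eta etap.
  have [N HN] := small_N etap; exists N => n hn.
  have := proj2 (Hf n); have := inv_mono R hn; move=> i1 i2; set a1 := (n.+1%:R : R)^-1 in i1 i2; set a2 := (N.+1%:R : R)^-1 in i1 HN; lra.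
exists p; split => // m Mm.
set c := complex.Re (ip (x - p) m).
set K := nq m + 1.
have Kp : 0 < K by rewrite /K; have := nq_ge0 Hip m; lra.
set t := c / K.
have := hlb _ (MD _ _ Mp (MZ t _ Mm)).
rewrite opprD addrA (nqB Hip) (nqZr Hip) (ipZr Hip) cjR ReMR -/c.
move=> hh.
have tK : c = t * K by rewrite /t mulrVK // unitfE gt_eqF.
have n0 := nq_ge0 Hip m.
have h3 : t ^+ 2 * (nq m + 2) <= 0.
  rewrite tK in hh; rewrite /K in hh; nra.
have t0 : t = 0.
  apply/eqP; rewrite -sqrf_eq0 eq_le sqr_ge0 andbT.
  rewrite -(pmulr_lle0 _ (_ : 0 < nq m + 2)) //; lra.
by rewrite tK t0 mul0r.
Qed.

End Proj.

Section Maxi.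
Variable R : realType.
Local Notation C := R[i].
Variable V : lmodType C.
Variable ip : V -> V -> C.
Hypothesis Hip : inner_product ip.
Variable B : V -> V.
Hypothesis Blin : is_linear B.
Hypothesis Bsa : self_adjoint ip B.

Lemma B0 : B 0 = 0. Proof. by case: (linP Blin). Qed.
Lemma BD a b : B (a + b) = B a + B b. Proof. by case: (linP Blin). Qed.
Lemma BZ (c : C) a : B (c *: a) = c *: B a. Proof. by case: (linP Blin). Qed.
Lemma BB a b : B (a - b) = B a - B b. Proof. by case: (linP Blin). Qed.

Lemma Bsw x y : ip x (B y) = ip (B x) y.
Proof. by rewrite Bsa. Qed.

Lemma iterB k x y : ip (iter k B x) y = ip x (iter k B y).
Proof.
elim: k x y => [//|k IH] x y /=.
by rewrite -Bsw IH -iterSr.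
Qed.

Definition RS (S : V -> Prop) :=
  [/\ forall a b, S a -> S b -> S (a + b),
      forall (r : R) a, S a -> S (r%:C *: a) & forall a, S a -> S (B a)].

Definition cyc (v : V) : V -> Prop := fun z => forall S, RS S -> S v -> S z.

Lemma RS_cyc v : RS (cyc v).
Proof.
split.
- by move=> a b ha hb S HS Sv; case: (HS) => h1 _ _; apply: h1; [exact: ha|exact: hb].
- by move=> r a ha S HS Sv; case: (HS) => _ h2 _; apply: h2; exact: ha.
- by move=> a ha S HS Sv; case: (HS) => _ _ h3; apply: h3; exact: ha.
Qed.

Lemma cyc_v v : cyc v v.
Proof. by move=> S _. Qed.

Lemma RS0 S v : RS S -> S v -> S 0.
Proof. by case=> _ h _ Sv; have := h 0 v Sv; rewrite scale0r. Qed.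

Lemma cyc_real v z z' : cyc v z -> cyc v z' -> ip z z' = ip z' z.
Proof.
pose S1 := fun z => forall k, ip z (iter k B v) = ip (iter k B v) z.
have RS1 : RS S1.
  split.
  - by move=> a b ha hb k; rewrite (ipDl Hip) (ipDr Hip) ha hb.
  - by move=> r a ha k; rewrite (ipZl Hip) (ipZr Hip) cjR ha.
  - move=> a ha k; rewrite -Bsw; have := ha k.+1; rewrite /= => ->.
    by rewrite -Bsw.
have S1v : S1 v by move=> k; rewrite iterB.
pose S2 := fun y => forall w, cyc v w -> ip w y = ip y w.
have RS2 : RS S2.
  split.
  - by move=> a b ha hb w hw; rewrite (ipDl Hip) (ipDr Hip) ha // hb.
  - by move=> r a ha w hw; rewrite (ipZl Hip) (ipZr Hip) cjR ha.
  - move=> a ha w hw; rewrite Bsw ha; first by rewrite Bsw.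
    by case: (RS_cyc v) => _ _ h; apply: h.
have S2v : S2 v by move=> w hw; have := hw S1 RS1 S1v 0%N.
by move=> hz hz'; apply: (hz' S2 RS2 S2v).
Qed.


Definition Good (u : V) (W : V -> Prop) :=
  [/\ W u, RS W & forall a b, W a -> W b -> ip a b = ip b a].

Lemma good_cyc u : Good u (cyc u).
Proof. split; [exact: cyc_v | exact: RS_cyc | by move=> a b; apply: cyc_real]. Qed.

Lemma maximal_good u : exists W, Good u W /\ forall W', Good u W' -> (forall x, W x -> W' x) -> forall x, W' x -> W x.
Proof.
pose P : set (set V) := fun W => W = set0 \/ Good u W.
have hP : forall F : set (set V), (F `<=` P)%classic -> total_on F subset ->
    P (\bigcup_(X in F) X)%classic.
  move=> F FP tot.
  have [[X0 FX0 [x0 X0x0]]|none] := pselect (exists2 X, F X & exists x, X x); last first.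
    left; apply/seteqP; split => x; last by [].
    by case=> X FX Xx; apply: none; exists X => //; exists x.
  have GX : forall X, F X -> forall x, X x -> Good u X.
    move=> X FX x Xx; case: (FP X FX) => // Xe; by rewrite Xe in Xx.
  have [uX0 [h1 h2 h3] h4] := GX X0 FX0 x0 X0x0.
  have two : forall X Y a b, F X -> F Y -> X a -> Y b ->
      exists Z, [/\ F Z, Z a & Z b].
    move=> X Y a b FX FY Xa Yb; case: (tot X Y FX FY) => sub.
      by exists Y; split => //; apply: sub.
    by exists X; split => //; apply: sub.
  right; split.
  - by exists X0.
  - split.
    + move=> a b [X FX Xa] [Y FY Yb]; have [Z [FZ Za Zb]] := two _ _ _ _ FX FY Xa Yb.
      have [_ [g1 _ _] _] := GX Z FZ a Za; exists Z => //; exact: g1.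
    + move=> r a [X FX Xa]; have [_ [_ g2 _] _] := GX X FX a Xa.
      exists X => //; exact: g2.
    + move=> a [X FX Xa]; have [_ [_ _ g3] _] := GX X FX a Xa.
      exists X => //; exact: g3.
  - move=> a b [X FX Xa] [Y FY Yb]; have [Z [FZ Za Zb]] := two _ _ _ _ FX FY Xa Yb.
    have [_ _ g4] := GX Z FZ a Za; exact: g4.
have [W [PW Wmax]] := Zorn_bigcup hP.
have GW : Good u W.
  case: PW => // W0; exfalso; apply: (Wmax (cyc u)); last by right; exact: good_cyc.
  rewrite W0; split => [x //|h]; have hu := @cyc_v u; by have := h u hu.
exists W; split => // W' GW' sub x W'x.
apply: contrapT => nWx; apply: (Wmax W'); last by right.
split => // /(_ x W'x); exact: nWx.
Qed.

End Maxi.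

Section Decomp.
Variable R : realType.
Local Notation C := R[i].
Variable V : lmodType C.
Variable ip : V -> V -> C.
Hypothesis Hip : inner_product ip.
Hypothesis sh : separable_hilbert ip.
Variable B : V -> V.
Hypothesis Blin : is_linear B.
Variable K : R.
Hypothesis BK : forall z, nq ip (B z) <= K * nq ip z.
Hypothesis Bsa : self_adjoint ip B.
Variable u : V.
Variable W : V -> Prop.
Hypothesis GW : Good ip B u W.
Hypothesis Wmax : forall W', Good ip B u W' -> (forall x, W x -> W' x) -> forall x, W' x -> W x.

Lemma W_add a b : W a -> W b -> W (a + b). Proof. by case: GW => _ [h _ _] _; apply: h. Qed.
Lemma W_scale (r : R) a : W a -> W (r%:C *: a). Proof. by case: GW => _ [_ h _] _; apply: h. Qed.
Lemma W_B a : W a -> W (B a). Proof. by case: GW => _ [_ _ h] _; apply: h. Qed.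
Lemma W_real a b : W a -> W b -> ip a b = ip b a. Proof. by case: GW => _ _ h; apply: h. Qed.
Lemma W_u : W u. Proof. by case: GW. Qed.
Lemma W_0 : W 0. Proof. by have := W_scale 0 W_u; rewrite scale0r. Qed.
Lemma W_opp a : W a -> W (- a).
Proof. by move=> h; have := W_scale (-1) h; rewrite rmorphN1 scaleN1r. Qed.
Lemma W_sub a b : W a -> W b -> W (a - b).
Proof. by move=> ha hb; apply: W_add => //; apply: W_opp. Qed.

Lemma W_orth v : (forall w, W w -> ip w v = 0) -> v = 0.
Proof.
move=> ho.
pose S3 := fun y => forall w, W w -> ip w y = 0.
have RS3 : RS B S3.
  split.
  - by move=> a b ha hb w hw; rewrite (ipDr Hip) ha // hb // addr0.
  - by move=> r a ha w hw; rewrite (ipZr Hip) ha // mulr0.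
  - by move=> a ha w hw; rewrite (Bsw Bsa) ha //; apply: W_B.
pose W' := fun x => exists w z, [/\ W w, cyc B v z & x = w + z].
have c0 : cyc B v 0 by apply: (RS0 (RS_cyc B v)); apply: cyc_v.
have GW' : Good ip B u W'.
  split.
  - by exists u, 0; split => //; [exact: W_u | rewrite addr0].
  - split.
    + move=> a b [w1 [z1 [h1 h2 ->]]] [w2 [z2 [h3 h4 ->]]].
      exists (w1 + w2), (z1 + z2); split; first exact: W_add.
        by case: (RS_cyc B v) => g _ _; apply: g.
      by rewrite addrACA.
    + move=> r a [w1 [z1 [h1 h2 ->]]]; exists (r%:C *: w1), (r%:C *: z1).
      split; first exact: W_scale.
        by case: (RS_cyc B v) => _ g _; apply: g.
      by rewrite scalerDr.
    + move=> a [w1 [z1 [h1 h2 ->]]]; exists (B w1), (B z1).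
      split; first exact: W_B.
        by case: (RS_cyc B v) => _ _ g; apply: g.
      by rewrite (BD Blin).
  - move=> a b [w1 [z1 [h1 h2 ->]]] [w2 [z2 [h3 h4 ->]]].
    have o1 : ip w1 z2 = 0 by apply: (h4 S3 RS3 ho).
    have o2 : ip w2 z1 = 0 by apply: (h2 S3 RS3 ho).
    have o3 : ip z1 w2 = 0 by rewrite (ipC Hip) o2 cj0.
    have o4 : ip z2 w1 = 0 by rewrite (ipC Hip) o1 cj0.
    rewrite !(ipDl Hip) !(ipDr Hip) o1 o2 o3 o4 (W_real h1 h3).
    by rewrite (cyc_real Hip Bsa h2 h4).
have hv : W' v by exists 0, v; split; [exact: W_0 | exact: cyc_v | by rewrite add0r].
have sub : forall x, W x -> W' x.
  by move=> x Wx; exists x, 0; split => //; rewrite addr0.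
have Wv := Wmax GW' sub hv.
by apply: (nq_eq0 Hip); rewrite /nq ho.
Qed.


Lemma conj_Im (z : C) : (z^* = z) <-> complex.Im z = 0.
Proof.
case: z => a b; split => [h|/= ->].
  by have := congr1 (@complex.Im _) h; rewrite conjE /= => h'; lra.
by apply/eqP; rewrite eq_complex /= oppr0 !eqxx.
Qed.

Lemma real_Im a b : ip a b = ip b a <-> complex.Im (ip a b) = 0.
Proof. split => h; first by apply: (proj1 (conj_Im _)); rewrite -(ipC Hip) h. by rewrite (ipC Hip a b) (proj2 (conj_Im _) h). Qed.

Lemma W_Im a b : W a -> W b -> complex.Im (ip a b) = 0.
Proof. by move=> ha hb; apply/real_Im; apply: W_real. Qed.

Lemma W_closed f x : (forall n, W (f n)) -> conv ip f x -> W x.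
Proof.
move=> Wf cf.
pose Wc := fun x => exists f, (forall n, W (f n)) /\ conv ip f x.
have GWc : Good ip B u Wc.
  split.
  - by exists (fun _ => u); split; [move=> _; exact: W_u | exact: conv_const].
  - split.
    + move=> a b [g [hg cg]] [h [hh ch]]; exists (fun n => g n + h n); split.
        by move=> n; apply: W_add.
      exact: conv_add.
    + move=> r a [g [hg cg]]; exists (fun n => r%:C *: g n); split.
        by move=> n; apply: W_scale.
      exact: conv_scale.
    + move=> a [g [hg cg]]; exists (fun n => B (g n)); split.
        by move=> n; apply: W_B.
      by apply: (conv_lin Hip (K := K)) => //; apply: BB.
  - move=> a b [g [hg cg]] [h [hh ch]]; apply/real_Im.
    have s1 : forall n, complex.Im (ip a (h n)) = 0.
      by move=> n; apply: (conv_real Hip cg) => m; apply: W_Im.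
    have s2 : complex.Im (ip b a) = 0.
      apply: (conv_real Hip ch) => n.
      by rewrite (ipC Hip) ImJ s1 oppr0.
    by rewrite (ipC Hip) ImJ s2 oppr0.
apply: (Wmax GWc); last by exists f.
by move=> y Wy; exists (fun _ => y); split => //; exact: conv_const.
Qed.

Lemma W_pyth a b : W a -> W b -> nq ip (a + 'i%C *: b) = nq ip a + nq ip b.
Proof.
move=> ha hb; rewrite (nqD Hip) (nq_i Hip) (ipZr Hip) cji.
suff -> : complex.Re (- 'i%C * ip a b) = 0 by rewrite mulr0 addr0.
by move: (W_Im ha hb); case: (ip a b) => x y /= ->; ring.
Qed.

Lemma W_uniq a b a' b' : W a -> W b -> W a' -> W b' ->
  a + 'i%C *: b = a' + 'i%C *: b' -> a = a' /\ b = b'.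
Proof.
move=> ha hb ha' hb' e.
have e2 : (a - a') + 'i%C *: (b - b') = 0.
  by rewrite scalerBr addrACA e -opprD subrr.
have := W_pyth (W_sub ha ha') (W_sub hb hb'); rewrite e2 (nq0 Hip) => h.
have n1 := nq_ge0 Hip (a - a'); have n2 := nq_ge0 Hip (b - b').
have z1 : nq ip (a - a') = 0 by lra.
have z2 : nq ip (b - b') = 0 by lra.
by split; apply/eqP; rewrite -subr_eq0; apply/eqP; apply: (nq_eq0 Hip).
Qed.

Lemma W_decomp x : exists a b, [/\ W a, W b & x = a + 'i%C *: b].
Proof.
pose M := fun x => exists a b, [/\ W a, W b & x = a + 'i%C *: b].
have M0 : M 0 by exists 0, 0; split; [exact: W_0 | exact: W_0 | by rewrite scaler0 addr0].
have MD : forall a b, M a -> M b -> M (a + b).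
  move=> _ _ [a [b [ha hb ->]]] [c [d [hc hd ->]]]; exists (a + c), (b + d).
  by split; [exact: W_add | exact: W_add | rewrite scalerDr addrACA].
have MZ : forall (r : R) a, M a -> M (r%:C *: a).
  move=> r _ [a [b [ha hb ->]]]; exists (r%:C *: a), (r%:C *: b).
  split; [exact: W_scale | exact: W_scale |].
  by rewrite scalerDr !scalerA mulrC.
have Mcl : forall f l, (forall n, M (f n)) -> conv ip f l -> M l.
  move=> f l hf cf.
  have [fa hfa] := choice hf.
  have [fb hfb] := choice hfa.
  have pyth : forall m n, nq ip (f m - f n) = nq ip (fa m - fa n) + nq ip (fb m - fb n).
    move=> m n; have [h1 h2 h3] := hfb m; have [h4 h5 h6] := hfb n.
    rewrite h3 h6 -W_pyth; [|exact: W_sub|exact: W_sub].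
    by rewrite scalerBr opprD addrACA.
  have cc := conv_cauchy Hip cf.
  have ca : cauchy ip fa.
    move=> e ep; have [N HN] := cc e ep; exists N => m n hm hn.
    have := HN m n hm hn; rewrite pyth; have := nq_ge0 Hip (fb m - fb n); lra.
  have cb : cauchy ip fb.
    move=> e ep; have [N HN] := cc e ep; exists N => m n hm hn.
    have := HN m n hm hn; rewrite pyth; have := nq_ge0 Hip (fa m - fa n); lra.
  have [a ha] := complete_conv Hip sh ca.
  have [b hb] := complete_conv Hip sh cb.
  have Wa : W a by apply: (W_closed (f := fa)) => // n; case: (hfb n).
  have Wb : W b by apply: (W_closed (f := fb)) => // n; case: (hfb n).
  exists a, b; split => //.
  have c3 : conv ip (fun n => fa n + 'i%C *: fb n) (a + 'i%C *: b).
    by apply: conv_add => //; apply: conv_scale.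
  have ef : f = (fun n => fa n + 'i%C *: fb n).
    by apply: funext => n; case: (hfb n).
  rewrite ef in cf; exact: (conv_uniq Hip cf c3).
have [p [Mp hp]] := proj Hip sh M0 MD MZ Mcl x.
suff -> : x = p by [].
apply/eqP; rewrite -subr_eq0; apply/eqP; apply: W_orth => w hw.
have r1 := hp w ltac:(exists w, 0; split; [exact: hw|exact: W_0|by rewrite scaler0 addr0]).
have r2 := hp ('i%C *: w) ltac:(exists 0, w; split; [exact: W_0|exact: hw|by rewrite add0r]).
rewrite (ipZr Hip) cji in r2.
apply/eqP; rewrite (ipC Hip) conjC_eq0; apply/eqP.
move: r1 r2; case: (ip (x - p) w) => c d /= -> h2.
apply/eqP; rewrite eq_complex /= eqxx /=; apply/eqP; move: h2; rewrite /=. 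
move=> h2; lra.
Qed.

End Decomp.

Definition antiunitary_inv (R : realType) (V : lmodType R[i]) (ip : V -> V -> R[i])
  (J : V -> V) :=
  [/\ forall x y, J (x + y) = J x + J y,
      forall (c : R[i]) x, J (c *: x) = c^* *: J x,
      forall x y, ip (J x) (J y) = (ip x y)^*
    & forall x, J (J x) = x].

Section MkJ.
Variable R : realType.
Local Notation C := R[i].
Variable V : lmodType C.
Variable ip : V -> V -> C.
Hypothesis Hip : inner_product ip.
Hypothesis sh : separable_hilbert ip.
Variable B : V -> V.
Hypothesis Blin : is_linear B.
Variable K : R.
Hypothesis BK : forall z, nq ip (B z) <= K * nq ip z.
Hypothesis Bsa : self_adjoint ip B.
Variable u : V.
Variable W : V -> Prop.
Hypothesis GW : Good ip B u W.
Hypothesis Wmax : forall W', Good ip B u W' -> (forall x, W x -> W' x) -> forall x, W' x -> W x.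

Local Notation Wd := (W_decomp Hip sh Blin BK Bsa GW Wmax).
Local Notation Wu := (W_uniq Hip GW).

Lemma ii : 'i%C * 'i%C = -1 :> C.
Proof. by apply/eqP; rewrite eq_complex /=; apply/andP; split; apply/eqP; ring. Qed.

Lemma crect (c : C) : c = (complex.Re c)%:C + 'i%C * (complex.Im c)%:C.
Proof. by case: c => a b; apply/eqP; rewrite eq_complex /=; apply/andP; split; apply/eqP; ring. Qed.

Lemma crectJ (c : C) : c^* = (complex.Re c)%:C - 'i%C * (complex.Im c)%:C.
Proof. by case: c => a b; apply/eqP; rewrite eq_complex /=; apply/andP; split; apply/eqP; ring. Qed.

Lemma Wreal_conj a b : W a -> W b -> (ip a b)^* = ip a b.
Proof. by move=> ha hb; rewrite -(ipC Hip) (W_real GW hb ha). Qed.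

Lemma core_J : exists J : V -> V, [/\ antiunitary_inv ip J,
   forall x, J (B x) = B (J x) & J u = u].
Proof.
have [pa hpa] := choice Wd.
have [pb hpb] := choice hpa.
pose J x := pa x - 'i%C *: pb x.
have Jspec : forall a b, W a -> W b -> J (a + 'i%C *: b) = a - 'i%C *: b.
  move=> a b ha hb; have [h1 h2 h3] := hpb (a + 'i%C *: b).
  by rewrite /J; have [-> ->] := Wu h1 h2 ha hb (esym h3).
have Wpa : forall x, W (pa x) by move=> x; case: (hpb x).
have Wpb : forall x, W (pb x) by move=> x; case: (hpb x).
have ex : forall x, x = pa x + 'i%C *: pb x by move=> x; case: (hpb x).
have JD : forall x y, J (x + y) = J x + J y.
  move=> x y.
  have e : x + y = (pa x + pa y) + 'i%C *: (pb x + pb y).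
    by rewrite scalerDr addrACA -!ex.
  rewrite e Jspec; [|exact: (W_add GW) | exact: (W_add GW)].
  by rewrite /J scalerDr opprD addrACA.
have JR : forall (r : R) x, J (r%:C *: x) = r%:C *: J x.
  move=> r x.
  have e : r%:C *: x = r%:C *: pa x + 'i%C *: (r%:C *: pb x).
    by rewrite scalerA mulrC -scalerA -scalerDr -ex.
  rewrite e Jspec; [|exact: (W_scale GW) | exact: (W_scale GW)].
  by rewrite /J scalerBr scalerA mulrC -scalerA.
have JI : forall x, J ('i%C *: x) = - 'i%C *: J x.
  move=> x.
  have e : 'i%C *: x = - pb x + 'i%C *: pa x.
    by rewrite {1}(ex x) scalerDr scalerA ii scaleN1r addrC.
  rewrite e Jspec; [|exact: (W_opp GW) | exact: Wpa].
  rewrite /J scalerBr scalerA mulNr ii opprK scale1r scaleNr; by rewrite addrC.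
have JZ : forall (c : C) x, J (c *: x) = c^* *: J x.
  move=> c x; rewrite {1}(crect c) scalerDl JD JR -scalerA JI JR crectJ.
  by rewrite scalerBl scalerA mulNr scaleNr.
have JJ : forall x, J (J x) = x.
  move=> x; rewrite {2}/J -scalerN Jspec; [|exact: Wpa|exact: (W_opp GW)].
  by rewrite scalerN opprK -ex.
have JU : forall x y, ip (J x) (J y) = (ip x y)^*.
  move=> x y; rewrite /J [in RHS](ex x) [in RHS](ex y).
  have := Wpa x; have := Wpb x; have := Wpa y; have := Wpb y.
  move: (pa x) (pb x) (pa y) (pb y) => a b c d hd hc hb ha.
  rewrite !(ipBl Hip) !(ipBr Hip) !(ipDl Hip) !(ipDr Hip) !(ipZl Hip) !(ipZr Hip).
  rewrite !cjD !cjM cji ?cjK ?(Wreal_conj ha hc) ?(Wreal_conj ha hd).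
  rewrite ?(Wreal_conj hb hc) ?(Wreal_conj hb hd); rewrite ?cjN ?cji ?opprK; ring.
have JB : forall x, J (B x) = B (J x).
  move=> x.
  have e : B x = B (pa x) + 'i%C *: B (pb x) by rewrite {1}(ex x) (BD Blin) (BZ Blin).
  rewrite e Jspec; [|exact: (W_B GW) | exact: (W_B GW)].
  by rewrite /J (BB Blin) (BZ Blin).
exists J; split => //.
have e : u = u + 'i%C *: 0 by rewrite scaler0 addr0.
by rewrite {1}e Jspec; [rewrite scaler0 subr0 | exact: (W_u GW) | exact: (W_0 GW)].
Qed.

End MkJ.

Section Final.
Variable R : realType.
Local Notation C := R[i].
Variable V : lmodType C.
Variable ip : V -> V -> C.

Lemma exists_J (B : V -> V) : separable_hilbert ip -> bounded_op ip B -> self_adjoint ip B ->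
  forall u, exists J, [/\ antiunitary_inv ip J, forall x, J (B x) = B (J x) & J u = u].
Proof.
move=> sh bB Bsa u.
have Hip : inner_product ip by case: sh.
have Blin : is_linear B by case: bB.
have [K BK] := bounded_nq Hip bB.
have [W [GW Wmax]] := maximal_good Hip Bsa u.
exact: (core_J Hip sh Blin BK Bsa GW Wmax).
Qed.

Lemma rk1_fix (A : V -> V) (u : V) (J : V -> V) : inner_product ip ->
  self_adjoint ip A -> (forall x, exists c, A x = c *: u) -> u != 0 ->
  antiunitary_inv ip J -> J u = u -> forall x, J (A (J x)) = A x.
Proof.
move=> Hip Asa hc0 unz [JD JZ JU JJ] Ju x.
have [c hc] := choice hc0.
have nz : ip u u != 0.
  by apply/negP => /eqP h; move/negP: unz; apply; apply/eqP; apply: (ipD0 Hip).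
have key : forall y, c y * ip u u = (c u)^* * ip y u.
  move=> y; rewrite -(ipZl Hip) -hc Asa hc (ipZr Hip) //.
have cu : (c u)^* = c u by apply: (mulIf nz); rewrite -key.
have nr : (ip u u)^* = ip u u by rewrite (ipxx Hip) cjR.
rewrite !hc JZ Ju; congr (_ *: _); apply: (mulIf nz).
rewrite -{1}nr -cjM key cjM cjK key cu.
have : ip (J x) (J u) = (ip x u)^* by apply: JU.
by rewrite Ju => ->; rewrite cjK.
Qed.

End Final.

Theorem corollary4p4 (R : realType) (V : lmodType R[i]) (ip : V -> V -> R[i])
  (T A B : V -> V) :
  separable_hilbert ip ->
  bounded_op ip T ->
  bounded_op ip A -> self_adjoint ip A ->
  bounded_op ip B -> self_adjoint ip B ->
  (forall x : V, T x = A x + 'i%C *: B x) ->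
  rank_one A \/ rank_one B ->
  complex_symmetric ip T.
Proof.
move=> sh bT bA Asa bB Bsa hT hr.
have Hip : inner_product ip by case: sh.
have final : forall J, antiunitary_inv ip J -> (forall x, J (A (J x)) = A x) ->
    (forall x, J (B (J x)) = B x) -> complex_symmetric ip T.
  move=> J [JD JZ JU JJ] hA hB.
  exists J; split.
    split => // x; rewrite /hnorm JU (ipxx Hip) cjR; by [].
  exists (fun x => A x - 'i%C *: B x); split.
    move=> x y; rewrite hT (ipDl Hip) (ipZl Hip) (ipBr Hip) (ipZr Hip) cji.
    by rewrite Asa Bsa mulNr opprK.
  move=> x; rewrite -scaleNr JD JZ hA hB cjN cji opprK hT; by [].
case: hr => [[u [unz [hc _]]]|[u [unz [hc _]]]].
- have [J [HJ JB Ju]] := exists_J sh bB Bsa u.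
  apply: (final J HJ); first exact: (rk1_fix Hip Asa hc unz HJ Ju).
  by move=> x; rewrite JB; case: HJ => _ _ _ ->.
- have [J [HJ JA Ju]] := exists_J sh bA Asa u.
  apply: (final J HJ); last exact: (rk1_fix Hip Bsa hc unz HJ Ju).
  by move=> x; rewrite JA; case: HJ => _ _ _ ->.
Qed.
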